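(* Let $m\ge1$, $N=2^m$. Then over $\mathbb{F}_2$: (i) $\boldsymbol{G}_N=\boldsymbol{G}_N^{-1}$; (ii) $\mathbf{Q}_{\pi}\boldsymbol{G}_N=(\boldsymbol{G}_N\mathbf{Q}_{\pi})^{-1}$; (iii) $(\boldsymbol{G}_N\mathbf{Q}_{\pi})^2=\mathbf{Q}_{\pi}\boldsymbol{G}_N$; (iv) $\boldsymbol{G}_N\mathbf{Q}_{\pi}\boldsymbol{G}_N=\mathbf{Q}_{\pi}\boldsymbol{G}_N\mathbf{Q}_{\pi}$.
   Context: $\boldsymbol{G}_N=\begin{pmatrix}1&0\\1&1\end{pmatrix}^{\otimes m}$ over $\mathbb{F}_2$ (Kronecker power), indices $0,\dots,N-1$. $\mathbf{Q}_{\pi}$ is the $N\times N$ permutation matrix of the permutation of $[0,N-1]$ swapping $i$ and $N-1-i$ for all $i$. *)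

(* Defs.v *)
From mathcomp Require Import all_boot all_order all_algebra all_fingroup.
Set Implicit Arguments. Unset Strict Implicit. Unset Printing Implicit Defensive.
Import GRing.Theory.
Local Open Scope ring_scope.

(* Row/column indices of a Kronecker product 'I_(m * p): i = (i %/ p) * p + i %% p. *)
Lemma kron_div_ord m p (i : 'I_(m * p)) : (i %/ p < m)%N.
Proof.
have := ltn_ord i; move: (nat_of_ord i) => k; clear i.
case: p => [|p]; first by rewrite muln0.
by rewrite ltn_divLR.
Qed.
Lemma kron_mod_ord m p (i : 'I_(m * p)) : (i %% p < p)%N.
Proof.
have := ltn_ord i; move: (nat_of_ord i) => k; clear i.
case: p => [|p]; first by rewrite muln0.
by rewrite ltn_mod.
Qed.

Definition kron (R : pzRingType) (m n p q : nat)
  (A : 'M[R]_(m, n)) (B : 'M[R]_(p, q)) : 'M[R]_(m * p, n * q) :=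
  \matrix_(i, j) (A (Ordinal (kron_div_ord i)) (Ordinal (kron_div_ord j)) *
                  B (Ordinal (kron_mod_ord i)) (Ordinal (kron_mod_ord j))).

Definition F2ker : 'M['F_2]_2 := \matrix_(i < 2, j < 2) (if (j <= i)%N then 1 else 0).

Fixpoint polarG (m : nat) : 'M['F_2]_(2 ^ m) :=
  match m return 'M['F_2]_(2 ^ m) with
  | 0 => 1%:M
  | m'.+1 => castmx (esym (expnS 2 m'), esym (expnS 2 m')) (kron F2ker (polarG m'))
  end.

Definition revperm (N : nat) : 'S_N := perm (@rev_ord_inj N).

Definition Qpi (N : nat) : 'M['F_2]_N := perm_mx (revperm N).

(* Main.v *)
Require Import Defs.
From mathcomp Require Import all_boot all_order all_algebra all_fingroup.
From mathcomp Require Import zify ring.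
Set Implicit Arguments. Unset Strict Implicit. Unset Printing Implicit Defensive.
Import GRing.Theory.
Local Open Scope ring_scope.

Lemma kron_idx_ord n q (a : 'I_n) (b : 'I_q) : (a * q + b < n * q)%N.
Proof.
have ha := ltn_ord a; have hb := ltn_ord b.
apply: (@leq_trans (a * q + q)); first by rewrite ltn_add2l.
by rewrite -mulSnr leq_mul2r ha orbT.
Qed.

Definition kidx n q (p : 'I_n * 'I_q) : 'I_(n * q) := Ordinal (kron_idx_ord p.1 p.2).

Lemma kron_sum (R : pzRingType) n q (f : 'I_n -> 'I_q -> R) :
  \sum_(k < n * q) f (Ordinal (kron_div_ord k)) (Ordinal (kron_mod_ord k))
  = \sum_(a < n) \sum_(b < q) f a b.
Proof.
rewrite pair_bigA /=.
rewrite (reindex (@kidx n q)) /=.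
  apply: eq_bigr => [[a b]] _ /=.
  have hb := ltn_ord b.
  have q0 : (0 < q)%N by case: (nat_of_ord b) hb => // ; lia.
  congr f; apply: val_inj => /=.
    by rewrite divnMDl // divn_small // addn0.
  by rewrite modnMDl modn_small.
exists (fun k => (Ordinal (kron_div_ord k), Ordinal (kron_mod_ord k))) => [[a b] _|k _].
  have hb := ltn_ord b.
  congr pair; apply: val_inj => /=.
    by rewrite divnMDl ?divn_small ?addn0 //; case: (nat_of_ord b) hb => //; lia.
  by rewrite modnMDl modn_small.
by apply: val_inj => /=; rewrite -divn_eq.
Qed.

Lemma kron_mul (R : comPzRingType) m n r p q s (A : 'M[R]_(m, n)) (B : 'M[R]_(p, q))
  (C : 'M[R]_(n, r)) (D : 'M[R]_(q, s)) :
  kron A B *m kron C D = kron (A *m C) (B *m D).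
Proof.
apply/matrixP => i j; rewrite !mxE.
rewrite big_distrlr /=.
rewrite -(kron_sum (fun a b => A (Ordinal (kron_div_ord i)) a * C a (Ordinal (kron_div_ord j)) *
   (B (Ordinal (kron_mod_ord i)) b * D b (Ordinal (kron_mod_ord j))))).
by apply: eq_bigr => k _; rewrite !mxE; ring.
Qed.

Lemma castmx_mul (R : pzRingType) n n' (e : n = n') (A B : 'M[R]_n) :
  castmx (e, e) A *m castmx (e, e) B = castmx (e, e) (A *m B).
Proof. by case: n' / e; rewrite !castmx_id. Qed.

Lemma castmx1 (R : pzRingType) n n' (e : n = n') :
  castmx (e, e) (1%:M : 'M[R]_n) = 1%:M.
Proof. by case: n' / e; rewrite !castmx_id. Qed.

Lemma kron1 (R : pzRingType) n q : kron (1%:M : 'M[R]_n) (1%:M : 'M[R]_q) = 1%:M.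
Proof.
apply/matrixP => i j; rewrite !mxE -natrM mulnb; congr (_%:R).
congr (nat_of_bool _); apply/andP/eqP => [[/eqP h1 /eqP h2]|->]; last by [].
apply: val_inj; rewrite /= (divn_eq i q) (divn_eq j q).
by move: h1 h2 => [->] [->].
Qed.

Lemma F2sq : F2ker *m F2ker = 1%:M.
Proof. apply/matrixP => i j; rewrite !mxE !big_ord_recl !big_ord0 !mxE.
case: i => [[|[|//]] ?]; case: j => [[|[|//]] ?] /=; by apply/eqP. Qed.

Lemma Q2E : Qpi 2 = \matrix_(i < 2, j < 2) (if (i + j == 1)%N then 1 else 0).
Proof. apply/matrixP => i j; rewrite /Qpi perm_mxEsub !mxE /revperm permE.
case: i => [[|[|//]] ?]; case: j => [[|[|//]] ?] /=; by apply/eqP. Qed.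

Lemma F2Q : (F2ker *m Qpi 2) *m (F2ker *m Qpi 2) = Qpi 2 *m F2ker.
Proof. rewrite Q2E; apply/matrixP => i j; rewrite !mxE !big_ord_recl !big_ord0 !mxE !big_ord_recl !big_ord0 !mxE.
case: i => [[|[|//]] ?]; case: j => [[|[|//]] ?] /=; by apply/eqP. Qed.

Lemma F2Q2 : F2ker *m Qpi 2 *m F2ker = Qpi 2 *m F2ker *m Qpi 2.
Proof. rewrite Q2E; apply/matrixP => i j; rewrite !mxE !big_ord_recl !big_ord0 !mxE !big_ord_recl !big_ord0 !mxE.
case: i => [[|[|//]] ?]; case: j => [[|[|//]] ?] /=; by apply/eqP. Qed.

Lemma QS m : Qpi (2 ^ m.+1) =
  castmx (esym (expnS 2 m), esym (expnS 2 m)) (kron (Qpi 2) (Qpi (2 ^ m))).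
Proof.
apply/matrixP => i j; rewrite castmxE !mxE /revperm !permE -natrM mulnb; congr (_%:R); congr (nat_of_bool _).
rewrite -!val_eqE /=.
have hM : (0 < 2 ^ m)%N by rewrite expn_gt0.
have hi := ltn_ord i; have hj := ltn_ord j.
move: (nat_of_ord i) (nat_of_ord j) hi hj; rewrite expnS; move: (2 ^ m)%N hM => M hM x y hx hy.
rewrite {1}(divn_eq x M) {1}(divn_eq y M).
have ha : (x %/ M < 2)%N by rewrite ltn_divLR.
have hc : (y %/ M < 2)%N by rewrite ltn_divLR.
have hb : (x %% M < M)%N by rewrite ltn_mod.
have hd : (y %% M < M)%N by rewrite ltn_mod.
move: (x %/ M)%N (y %/ M)%N (x %% M)%N (y %% M)%N ha hc hb hd => a c b d ha hc hb hd.
case: a ha => [|[|//]] _; case: c hc => [|[|//]] _; lia.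
Qed.

Lemma PS m : polarG m.+1 =
  castmx (esym (expnS 2 m), esym (expnS 2 m)) (kron F2ker (polarG m)).
Proof. by []. Qed.

Lemma Q0 : Qpi (2 ^ 0) = 1%:M.
Proof. by apply/matrixP => i j; rewrite !mxE !ord1. Qed.

Lemma Qsq n : Qpi n *m Qpi n = 1%:M.
Proof.
rewrite /Qpi -perm_mxM.
have -> : (revperm n * revperm n)%g = 1%g by apply/permP => i; rewrite permM !permE rev_ordK.
exact: perm_mx1.
Qed.

Lemma Psq m : polarG m *m polarG m = 1%:M.
Proof.
elim: m => [|m IH]; first by rewrite /= mul1mx.
by rewrite PS castmx_mul kron_mul F2sq IH kron1 castmx1.
Qed.

Lemma PQPQ m : (polarG m *m Qpi (2 ^ m)) *m (polarG m *m Qpi (2 ^ m))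
        = Qpi (2 ^ m) *m polarG m.
Proof.
elim: m => [|m IH]; first by rewrite Q0 /= !mul1mx.
by rewrite PS QS !castmx_mul !kron_mul F2Q IH.
Qed.

Lemma PQP m : polarG m *m Qpi (2 ^ m) *m polarG m
        = Qpi (2 ^ m) *m polarG m *m Qpi (2 ^ m).
Proof.
elim: m => [|m IH]; first by rewrite Q0 /= !mul1mx.
by rewrite PS QS !castmx_mul !kron_mul F2Q2 IH.
Qed.

Lemma inv_of n (A B : 'M['F_2]_n) : A *m B = 1%:M -> A \in unitmx /\ B = invmx A.
Proof.
move=> h; have [uA _] := mulmx1_unit h; split => //.
by rewrite -[invmx A]mulmx1 -h mulKmx.
Qed.

Theorem lemma2 (m : nat) (hm : (1 <= m)%N) :
  [/\ polarG m \in unitmx /\ polarG m = invmx (polarG m),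
      polarG m *m Qpi (2 ^ m) \in unitmx /\
        Qpi (2 ^ m) *m polarG m = invmx (polarG m *m Qpi (2 ^ m)),
      (polarG m *m Qpi (2 ^ m)) *m (polarG m *m Qpi (2 ^ m))
        = Qpi (2 ^ m) *m polarG m
    & polarG m *m Qpi (2 ^ m) *m polarG m
        = Qpi (2 ^ m) *m polarG m *m Qpi (2 ^ m)].
Proof.
split; [exact: inv_of (Psq m) | apply: inv_of | exact: PQPQ | exact: PQP].
by rewrite mulmxA -(mulmxA (polarG m)) Qsq mulmx1 Psq.
Qed.
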